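(* Let $T:X\to Y$ be a disjointness preserving linear bijection between Archimedean vector lattices. Then $T$ satisfies condition $(\beta)$ if and only if $T^{-1}$ is disjointness preserving.
   Context: All vector lattices are Archimedean. For a subset $A$ of a vector lattice $X$, $A^d=\{x\in X: |x|\wedge|a|=0 \text{ for all } a\in A\}$ and $A^{dd}=(A^d)^d$. For $a,b\in X$ we write $a\lhd b$ if $\{a\}^{dd}\subseteq\{b\}^{dd}$. A linear operator $S$ satisfies condition $(\beta)$ if $Sa\lhd Sb$ whenever $a\lhd b$. A linear operator is disjointness preserving if it maps disjoint elements to disjoint elements. *)

(* Defs.v *)
From mathcomp Require Import all_boot all_order all_algebra.
From mathcomp Require Import reals.
Set Implicit Arguments. Unset Strict Implicit. Unset Printing Implicit Defensive.
Import GRing.Theory Num.Theory.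
Local Open Scope ring_scope.

Section VL.
Variables (R : realType) (X : lmodType R) (le : X -> X -> Prop).

Definition is_sup (x y s : X) : Prop :=
  le x s /\ le y s /\ forall u, le x u -> le y u -> le s u.

Definition is_inf (x y i : X) : Prop :=
  le i x /\ le i y /\ forall u, le u x -> le u y -> le u i.

Definition archimedean_vector_lattice : Prop :=
  (forall x, le x x) /\
  (forall x y, le x y -> le y x -> x = y) /\
  (forall x y z, le x y -> le y z -> le x z) /\
  (forall x y z, le x y -> le (x + z) (y + z)) /\
  (forall (a : R) x, 0 <= a -> le 0 x -> le 0 (a *: x)) /\
  (forall x y, exists s, is_sup x y s) /\
  (forall x y, le 0 x -> (forall n : nat, le (x *+ n) y) -> x = 0).

Definition is_abs (x a : X) : Prop := is_sup x (- x) a.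

Definition disjoint (x y : X) : Prop :=
  exists ax ay, is_abs x ax /\ is_abs y ay /\ is_inf ax ay 0.

Definition dcompl (A : X -> Prop) : X -> Prop :=
  fun x => forall a, A a -> disjoint x a.

Definition ddcompl (A : X -> Prop) : X -> Prop := dcompl (dcompl A).

Definition lhd (a b : X) : Prop :=
  forall x, ddcompl (fun z => z = a) x -> ddcompl (fun z => z = b) x.

End VL.

Definition disjointness_preserving (R : realType) (X Y : lmodType R)
  (leX : X -> X -> Prop) (leY : Y -> Y -> Prop) (S : X -> Y) : Prop :=
  forall x y, disjoint leX x y -> disjoint leY (S x) (S y).

Definition cond_beta (R : realType) (X Y : lmodType R)
  (leX : X -> X -> Prop) (leY : Y -> Y -> Prop) (S : X -> Y) : Prop :=
  forall a b, lhd leX a b -> lhd leY (S a) (S b).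

(* Main.v *)
Require Import Defs.
From mathcomp Require Import all_boot all_order all_algebra.
From mathcomp Require Import reals.
Local Open Scope ring_scope.
Set Implicit Arguments. Unset Strict Implicit.
Import GRing.Theory Num.Theory.

Section Aux.
Variables (R : realType) (X : lmodType R) (le : X -> X -> Prop).
Hypothesis hX : archimedean_vector_lattice le.

Lemma le_refl' x : le x x.
Proof. by case: hX. Qed.
Lemma le_anti x y : le x y -> le y x -> x = y.
Proof. by case: hX => _ [+ _]; apply. Qed.
Lemma le_trans' x y z : le x y -> le y z -> le x z.
Proof. by case: hX => _ [_ [+ _]]; apply. Qed.
Lemma le_add x y z : le x y -> le (x + z) (y + z).
Proof. by case: hX => _ [_ [_ [+ _]]]; apply. Qed.
Lemma le_scale (a : R) x : 0 <= a -> le 0 x -> le 0 (a *: x).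
Proof. by case: hX => _ [_ [_ [_ [+ _]]]]; apply. Qed.
Lemma sup_ex x y : exists s, is_sup le x y s.
Proof. by case: hX => _ [_ [_ [_ [_ [+ _]]]]]; apply. Qed.

Lemma le_opp x y : le x y -> le (- y) (- x).
Proof.
move=> h; have := le_add (- x - y) h.
have -> : x + (- x - y) = - y by rewrite addrA subrr add0r.
by have -> : y + (- x - y) = - x by rewrite addrC -addrA addNr addr0.
Qed.

Lemma inf_ex x y : exists i, is_inf le x y i.
Proof.
have [s [h1 [h2 h3]]] := sup_ex (- x) (- y).
exists (- s); split; [|split].
- by rewrite -[x]opprK; apply: le_opp.
- by rewrite -[y]opprK; apply: le_opp.
- move=> u hu1 hu2; rewrite -[u]opprK; apply: le_opp; apply: h3; exact: le_opp.
Qed.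

Lemma sup_uniq x y s s' : is_sup le x y s -> is_sup le x y s' -> s = s'.
Proof.
move=> [a1 [a2 a3]] [b1 [b2 b3]]; apply: le_anti; [exact: a3|exact: b3].
Qed.


Lemma abs_ge0 x a : is_abs le x a -> le 0 a.
Proof.
move=> [h1 [h2 _]].
have h : le 0 (a + a).
  apply: (le_trans' (y := x + a)).
    by have := le_add x h2; rewrite addNr addrC.
  by have := le_add a h1; rewrite [a + a]addrC.
have h2p : (0 : R) <= 2^-1 by rewrite invr_ge0 ler0n.
have := le_scale h2p h.
have -> : (2^-1 : R) *: (a + a) = a.
  by rewrite -mulr2n -scaler_nat scalerA mulVf ?scale1r // pnatr_eq0.
by [].
Qed.

Lemma disj_sym x y : Defs.disjoint le x y -> Defs.disjoint le y x.
Proof.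
move=> [ax [ay [h1 [h2 [i1 [i2 i3]]]]]].
by exists ay, ax; do !split => //; move=> u a b; apply: i3.
Qed.

Lemma disj_self x : Defs.disjoint le x x -> x = 0.
Proof.
move=> [a [a' [h1 [h2 [i1 [i2 i3]]]]]].
have e : a = a' := sup_uniq h1 h2.
subst a'.
have a0 : a = 0 by apply: le_anti => //; apply: i3; apply: le_refl'.
subst a; case: h1 => h1 [h1' _].
apply: le_anti => //.
have := le_add x h1'; by rewrite addNr add0r.
Qed.

Lemma self_dd a : ddcompl le (fun z => z = a) a.
Proof. move=> u hu; apply: disj_sym; exact: hu. Qed.

Lemma lhd_of z x : (forall w, Defs.disjoint le w x -> Defs.disjoint le w z) -> lhd le z x.
Proof.
move=> H u hu w hw; apply: hu => a ->; apply: H; exact: hw.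
Qed.

End Aux.

Theorem proposition3p6 (R : realType) (X Y : lmodType R)
  (leX : X -> X -> Prop) (leY : Y -> Y -> Prop)
  (hX : archimedean_vector_lattice leX) (hY : archimedean_vector_lattice leY)
  (T : {linear X -> Y}) (hTb : bijective T)
  (hTdp : disjointness_preserving leX leY T) :
  cond_beta leX leY T <->
  (forall Tinv : Y -> X, cancel T Tinv -> cancel Tinv T ->
     disjointness_preserving leY leX Tinv).
Proof.
split.
- move=> Hb Tinv c1 c2 u v huv.
  set x := Tinv u; set y := Tinv v.
  have [ax hax] := sup_ex hX x (- x).
  have [ay hay] := sup_ex hX y (- y).
  have [z [z1 [z2 z3]]] := inf_ex hX ax ay.
  have ax0 := abs_ge0 hX hax; have ay0 := abs_ge0 hX hay.
  have z0 : leX 0 z by apply: z3.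
  have habsz : is_abs leX z z.
    split; first exact: le_refl'.
    split; last by [].
    apply: (le_trans' hX (y := 0)) => //.
    by rewrite -oppr0; apply: le_opp.
  have key : forall t tA, is_abs leX t tA -> leX z tA ->
      forall w, Defs.disjoint leX w t -> Defs.disjoint leX w z.
    move=> t tA hat hz w [aw [tA' [hw [hat' [i1 [i2 i3]]]]]].
    have e : tA' = tA := sup_uniq hX hat' hat. subst tA'.
    exists aw, z; do !split => //.
    move=> q q1 q2; apply: i3 => //; exact: (le_trans' hX q2 hz).
  have lx : lhd leX z x := lhd_of (key _ _ hax z1).
  have ly : lhd leX z y := lhd_of (key _ _ hay z2).
  have dx := Hb _ _ lx _ (@self_dd _ _ leY (T z)).
  have dy := Hb _ _ ly _ (@self_dd _ _ leY (T z)).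
  rewrite /x c2 in dx; rewrite /y c2 in dy.
  have hv : Defs.disjoint leY (T z) v.
    by apply: dx => a0 ->; apply: disj_sym.
  have hzz : Defs.disjoint leY (T z) (T z).
    by apply: dy => a0 ->.
  have Tz0 := disj_self hY hzz.
  have zz : z = 0 by rewrite -(c1 z) Tz0 -(linear0 T) c1.
  by exists ax, ay; do !split => //; rewrite -zz.
- move=> Hinv a b hab.
  case: hTb => g c1 c2.
  have Hg := Hinv g c1 c2.
  move=> y hy.
  have hx : ddcompl leX (fun z => z = a) (g y).
    move=> u hu; rewrite -(c1 u); apply: Hg; apply: hy => a' ->.
    by apply: hTdp; apply: hu.
  have hxb := hab _ hx.
  move=> v hv; rewrite -(c2 y) -(c2 v); apply: hTdp; apply: hxb => b' ->.
  by rewrite -(c1 b); apply: Hg; apply: hv.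
Qed.
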